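(* There is an absolute constant $c>0$ such that the following holds. Let $A$ be a finite subset of $\mathbb{R}$ with $A\neq\{0\}$, and let $B$ and $C$ be finite sets of real numbers with $B+C\neq\{0\}$. Then $$|A(B+C)|\ge c\,(|A||B||C|)^{1/2}.$$
   Context: $B+C=\{b+c:b\in B,c\in C\}$ and $A(B+C)=\{a(b+c):a\in A,b\in B,c\in C\}$. *)

(* Defs.v *)
From HB Require Import structures.
From mathcomp Require Import all_boot all_order all_algebra.
From mathcomp Require Import finmap.
From mathcomp Require Export Rstruct.
From Stdlib Require Export Reals.
Set Implicit Arguments. Unset Strict Implicit. Unset Printing Implicit Defensive.
Import Order.TTheory GRing.Theory Num.Theory.
Local Open Scope ring_scope.
Local Open Scope fset_scope.

Definition sumset (B C : {fset R}) : {fset R} :=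
  [fset (b + c)%R | b in B, c in C].

Definition prodset (A X : {fset R}) : {fset R} :=
  [fset (a * x)%R | a in A, x in X].

(* Main.v *)
Require Import Defs.
From HB Require Import structures.
From mathcomp Require Import all_boot all_order all_algebra.
From mathcomp Require Import finmap.
From mathcomp Require Import Rstruct.
From Stdlib Require Import Reals.
From mathcomp Require Import ring lra zify.
From Stdlib Require Import Lia.
Import Order.TTheory GRing.Theory Num.Theory.
Local Open Scope fset_scope.
Local Open Scope ring_scope.

Section Sampling.
Variable T : finType.
Variable q : R.
Definition wt (f : {ffun T -> bool}) : R := \prod_t (if f t then q else 1 - q).

Lemma sampleX (X : {set T}) :
  \sum_(f : {ffun T -> bool}) wt f * \prod_(u in X) (f u)%:R = q ^+ #|X|.
Proof.
have := bigA_distr_bigA (fun (u:T) (b:bool) =>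
   (if b then q else 1-q) * (if u \in X then (b:nat)%:R else 1)).
move=> H.
transitivity (\sum_(f : {ffun T -> bool}) \prod_i
   ((if f i then q else 1-q) * (if i \in X then (f i : nat)%:R else 1))).
  apply: eq_bigr => f _; rewrite big_split /= [X in _ * X]big_mkcond /=.
  by [].
rewrite -H.
rewrite (eq_bigr (fun i => if i \in X then q else 1)); last first.
  move=> i _; rewrite big_bool /=; case: (i \in X); rewrite /= ?mulr1 ?mulr0 ?addr0 //.
  by rewrite addrC subrK.
by rewrite -big_mkcond /= prodr_const.
Qed.
End Sampling.

Section Core.
Variable T : finType.
Variable v : T -> R.
Hypothesis vinj : injective v.
Variable I : finType.
Variables p1 p2 : I -> T.
Hypothesis pinj : forall i j, p1 i = p1 j -> p2 i = p2 j -> i = j.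

Definition cross (i j : I) : bool := (v (p1 i) - v (p1 j)) * (v (p2 i) - v (p2 j)) < 0.

Lemma crossC i j : cross i j = cross j i.
Proof. by rewrite /cross -mulrNN !opprB. Qed.

Lemma cross_irr i : cross i i = false.
Proof. by rewrite /cross !subrr mulr0 ltxx. Qed.

Definition crs (J : {set I}) : nat :=
  #|[set p : I * I | [&& p.1 \in J, p.2 \in J & cross p.1 p.2]]|.

Definition rk (S : {set T}) t := #|[set s in S | v s < v t]|.

Lemma rk_lt (S : {set T}) t t' : t \in S -> v t < v t' -> (rk S t < rk S t')%nat.
Proof.
move=> tS lt; apply: proper_card; apply/properP; split.
  apply/subsetP => s; rewrite !inE => /andP[-> /lt_trans]; exact.
by exists t; rewrite !inE ?tS ?lt ?ltxx.
Qed.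

Arguments rk_lt {S t t'}.

Lemma rk_le (S : {set T}) t t' : v t <= v t' -> (rk S t <= rk S t')%nat.
Proof.
move=> le; apply: subset_leq_card; apply/subsetP => s; rewrite !inE.
by move=> /andP[-> /lt_le_trans]; apply.
Qed.

Lemma rk_bound (S : {set T}) t : t \in S -> (rk S t < #|S|)%nat.
Proof.
move=> tS; apply: proper_card; apply/properP; split.
  by apply/subsetP => s; rewrite !inE => /andP[].
by exists t; rewrite ?inE ?tS ?ltxx.
Qed.

Arguments rk_bound {S t}.
Arguments rk_le S {t t'}.

Lemma nocross (J : {set I}) (S1 S2 : {set T}) :
  (forall i, i \in J -> (p1 i \in S1) && (p2 i \in S2)) ->
  (forall i j, i \in J -> j \in J -> ~~ cross i j) ->
  (#|J| <= #|S1| + #|S2|)%nat.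
Proof.
move=> HS Hc.
pose h i := (rk S1 (p1 i) + rk S2 (p2 i))%nat.
have hinj : {in J &, injective h}.
  move=> i j iJ jJ; rewrite /h.
  have /andP[i1 i2] := HS i iJ; have /andP[j1 j2] := HS j jJ.
  have := Hc i j iJ jJ; rewrite /cross -leNgt => nc.
  case: (ltgtP (v (p1 i)) (v (p1 j))) => c1.
  - have : v (p2 i) - v (p2 j) <= 0.
      by rewrite -(nmulr_rge0 _ (x:=v (p1 i) - v (p1 j))) ?subr_lt0.
    rewrite subr_le0 => c2 E.
    have := rk_lt i1 c1; have := rk_le S2 c2; lia.
  - have : v (p2 j) - v (p2 i) <= 0.
      rewrite -(nmulr_rge0 _ (x:=v (p1 j) - v (p1 i))) ?subr_lt0 //.
      by rewrite -mulrNN !opprB.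
    rewrite subr_le0 => c2 E.
    have := rk_lt j1 c1; have := rk_le S2 c2; lia.
  - have e1 : p1 i = p1 j by apply: vinj. rewrite e1 => E.
    case: (ltgtP (v (p2 i)) (v (p2 j))) => c2.
    + have := rk_lt i2 c2; lia.
    + have := rk_lt j2 c2; lia.
    + by apply: pinj => //; apply: vinj.
rewrite cardE -(size_map h).
have -> : (#|S1| + #|S2| = size (iota 0 (#|S1| + #|S2|)))%nat by rewrite size_iota.
apply: uniq_leq_size.
  rewrite map_inj_in_uniq ?enum_uniq // => x y; rewrite !mem_enum; exact: hinj.
move=> k /mapP[i]; rewrite mem_enum => iJ ->; rewrite mem_iota /= add0n /h.
have /andP[i1 i2] := HS i iJ.
have := rk_bound i1; have := rk_bound i2; lia.
Qed.

Lemma crs_sub (J : {set I}) i j : i \in J -> j \in J -> cross i j ->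
  (crs (J :\ i) + 2 <= crs J)%nat.
Proof.
move=> iJ jJ cij.
have ij : i != j by apply: contraTneq cij => ->; rewrite cross_irr.
set S := [set p : I * I | [&& p.1 \in J, p.2 \in J & cross p.1 p.2]].
have sub : [set p : I * I | [&& p.1 \in J :\ i, p.2 \in J :\ i & cross p.1 p.2]]
   \subset S :\ (i, j) :\ (j, i).
  apply/subsetP => [[a b]]; rewrite !inE /= => /and3P[/andP[ai aJ] /andP[bi bJ] c].
  rewrite aJ bJ c !andbT; apply/andP; split.
    by rewrite xpair_eqE negb_and bi orbT.
  by rewrite xpair_eqE negb_and ai.
have h1 : (i, j) \in S by rewrite inE /= iJ jJ cij.
have h2 : (j, i) \in S :\ (i, j).
  by rewrite !inE /= xpair_eqE negb_and eq_sym ij /= iJ jJ crossC cij.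
rewrite /crs -/S.
have := subset_leq_card sub.
rewrite (cardsD1 (i, j) S) h1 (cardsD1 (j, i) (S :\ (i, j))) h2.
lia.
Qed.

Lemma lin (J : {set I}) (S1 S2 : {set T}) :
  (forall i, i \in J -> (p1 i \in S1) && (p2 i \in S2)) ->
  (2 * #|J| <= 2 * (#|S1| + #|S2|) + crs J)%nat.
Proof.
move: {2}#|J| (leqnn #|J|) => n; elim: n J => [|n IH] J leJ HS.
  by move: leJ; rewrite leqn0 => /eqP ->.
case: (pickP (fun p : I * I => [&& p.1 \in J, p.2 \in J & cross p.1 p.2]))
  => [[i j] /and3P[/= iJ jJ cij] | none].
  have := @crs_sub J i j iJ jJ cij.
  have := cardsD1 i J; rewrite iJ => cJ.
  have := IH (J :\ i).
  have -> : (#|J :\ i| <= n)%nat by move: leJ; rewrite cJ.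
  move=> /(_ isT) H.
  have : (2 * #|J :\ i| <= 2 * (#|S1| + #|S2|) + crs (J :\ i))%nat.
    by apply: H => k; rewrite inE => /andP[_ /HS].
  lia.
have := @nocross J S1 S2 HS.
have Hc : forall i j, i \in J -> j \in J -> ~~ cross i j.
  by move=> i j iJ jJ; have := none (i, j); rewrite /= iJ jJ /= => ->.
move=> /(_ Hc); lia.
Qed.

Variable q : R.
Hypothesis q0 : 0 <= q.
Hypothesis q1 : q <= 1.
Local Notation w := (wt T q).

Definition Ex (F : {ffun T -> bool} -> {ffun T -> bool} -> R) : R :=
  \sum_f \sum_g w f * w g * F f g.

Lemma wt_ge0 f : 0 <= w f.
Proof. by apply: prodr_ge0 => t _; case: (f t) => //; rewrite subr_ge0. Qed.

Lemma Ex_le F G : (forall f g, F f g <= G f g) -> Ex F <= Ex G.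
Proof.
move=> H; apply: ler_sum => f _; apply: ler_sum => g _.
by apply: ler_wpM2l => //; apply: mulr_ge0; apply: wt_ge0.
Qed.

Lemma Ex_sum (X : finType) (F : X -> {ffun T -> bool} -> {ffun T -> bool} -> R) :
  Ex (fun f g => \sum_x F x f g) = \sum_x Ex (F x).
Proof.
rewrite /Ex; under eq_bigr do under eq_bigr do rewrite mulr_sumr.
under eq_bigr do rewrite exchange_big /=.
by rewrite exchange_big.
Qed.

Lemma Ex_scale c F : Ex (fun f g => c * F f g) = c * Ex F.
Proof.
rewrite /Ex mulr_sumr; apply: eq_bigr => f _; rewrite mulr_sumr.
by apply: eq_bigr => g _; rewrite mulrCA.
Qed.

Lemma Ex_add F G : Ex (fun f g => F f g + G f g) = Ex F + Ex G.
Proof.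
rewrite /Ex -big_split; apply: eq_bigr => f _; rewrite -big_split.
by apply: eq_bigr => g _; rewrite mulrDr.
Qed.

Lemma Ex_prod X Y : Ex (fun f g => X f * Y g) =
  (\sum_f w f * X f) * (\sum_g w g * Y g).
Proof.
rewrite /Ex big_distrl; apply: eq_bigr => f _; rewrite big_distrr.
by apply: eq_bigr => g _ /=; rewrite mulrACA.
Qed.

Lemma samp0 : \sum_f w f = 1.
Proof.
have H := sampleX T q set0; rewrite cards0 expr0 in H.
rewrite -[RHS]H.
by apply: eq_bigr => f _; rewrite big_set0 mulr1.
Qed.

Lemma samp1 t : \sum_f w f * (f t)%:R = q.
Proof.
have H := sampleX T q [set t]; rewrite cards1 expr1 in H.
etransitivity; last exact: H.
by apply: eq_bigr => f _; rewrite big_set1.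
Qed.

Lemma samp2 t t' : t != t' -> \sum_f w f * ((f t)%:R * (f t')%:R) = q ^+ 2.
Proof.
move=> tt; have H := sampleX T q [set t; t']; rewrite cards2 tt in H.
etransitivity; last exact: H.
apply: eq_bigr => f _; rewrite big_setU1 ?big_set1 //.
by rewrite inE.
Qed.

Lemma cardR (X : finType) (A : {pred X}) : (#|A|%:R : R) = \sum_x (x \in A)%:R.
Proof.
rewrite -sum1_card natr_sum big_mkcond /=; apply: eq_bigr => x _.
by case: (x \in A).
Qed.

Definition crsR : R := \sum_i \sum_j (cross i j)%:R.

Lemma crs_setT : (crs setT)%:R = crsR.
Proof.
rewrite /crs cardR /crsR pair_bigA /=; apply: eq_bigr => [[i j]] _.
by rewrite !inE.
Qed.

Lemma ampl : 2 * q ^+ 2 * #|I|%:R <= 4 * q * #|T|%:R + q ^+ 4 * crsR.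
Proof.
pose J (f g : {ffun T -> bool}) := [set i | f (p1 i) && g (p2 i)].
have H : forall f g, 2 * (#|J f g|)%:R <=
   2 * ((#|[set t | f t]|)%:R + (#|[set t | g t]|)%:R) + (crs (J f g))%:R :> R.
  move=> f g; rewrite -!natrD -!natrM -natrD ler_nat; apply: lin => i.
  by rewrite !inE.
have := Ex_le (fun f g => 2 * (#|J f g|)%:R)
  (fun f g => 2 * ((#|[set t | f t]|)%:R + (#|[set t | g t]|)%:R) + (crs (J f g))%:R) H.
have -> : Ex (fun f g => 2 * (#|J f g|)%:R) = 2 * q ^+ 2 * #|I|%:R.
  rewrite Ex_scale -mulrA; congr (_ * _).
  rewrite (_ : Ex _ = Ex (fun f g => \sum_i (f (p1 i))%:R * (g (p2 i))%:R)); last first.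
    apply: eq_bigr => f _; apply: eq_bigr => g _; congr (_ * _); rewrite cardR.
    by apply: eq_bigr => i _; rewrite inE -mulnb natrM.
  rewrite Ex_sum.
  rewrite (eq_bigr (fun _ => q ^+ 2)); last first.
    by move=> i _; rewrite Ex_prod !samp1 expr2.
  by rewrite sumr_const mulr_natr cardE.
have -> : Ex (fun f g => 2 * ((#|[set t | f t]|)%:R + (#|[set t | g t]|)%:R)
     + (crs (J f g))%:R) = 4 * q * #|T|%:R + q ^+ 4 * crsR.
  rewrite Ex_add Ex_scale Ex_add.
  have -> : Ex (fun f g => (#|[set t | f t]|)%:R) = q * #|T|%:R.
    rewrite (_ : Ex _ = Ex (fun f g => \sum_t (f t)%:R * 1)); last first.
      apply: eq_bigr => f _; apply: eq_bigr => g _; congr (_ * _); rewrite cardR.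
      by apply: eq_bigr => t _; rewrite inE mulr1.
    rewrite Ex_sum (eq_bigr (fun _ => q)); last first.
      move=> t _; rewrite Ex_prod samp1 (eq_bigr (fun g => w g)) ?samp0 ?mulr1 //.
      by move=> g _; rewrite mulr1.
    by rewrite sumr_const mulr_natr cardE.
  have -> : Ex (fun f g => (#|[set t | g t]|)%:R) = q * #|T|%:R.
    rewrite (_ : Ex _ = Ex (fun f g => \sum_t 1 * (g t)%:R)); last first.
      apply: eq_bigr => f _; apply: eq_bigr => g _; congr (_ * _); rewrite cardR.
      by apply: eq_bigr => t _; rewrite inE mul1r.
    rewrite Ex_sum (eq_bigr (fun _ => q)); last first.
      move=> t _; rewrite Ex_prod samp1 (eq_bigr (fun g => w g)) ?samp0 ?mul1r //.
      by move=> g _; rewrite mulr1.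
    by rewrite sumr_const mulr_natr cardE.
  have -> : Ex (fun f g => (crs (J f g))%:R) = q ^+ 4 * crsR.
    rewrite (_ : Ex _ = Ex (fun f g => \sum_i \sum_j (cross i j)%:R *
       (((f (p1 i))%:R * (f (p1 j))%:R) * ((g (p2 i))%:R * (g (p2 j))%:R)))); last first.
      apply: eq_bigr => f _; apply: eq_bigr => g _; congr (_ * _).
      rewrite /crs cardR pair_bigA /=; apply: eq_bigr => [[i j]] _ /=.
      rewrite !inE; case: (cross i j); rewrite ?andbF ?mul0r //= andbT mul1r.
      rewrite -!mulnb !natrM; ring.
    rewrite Ex_sum /crsR mulr_sumr; apply: eq_bigr => i _.
    rewrite Ex_sum mulr_sumr; apply: eq_bigr => j _.
    rewrite Ex_scale; case cij: (cross i j); last by rewrite !mul0r mulr0.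
    rewrite Ex_prod mul1r mulr1.
    have n1 : p1 i != p1 j.
      by apply: contraTneq cij => e; rewrite /cross e subrr mul0r ltxx.
    have n2 : p2 i != p2 j.
      by apply: contraTneq cij => e; rewrite /cross e subrr mulr0 ltxx.
    by rewrite !samp2 // -exprD.
  ring.
by [].
Qed.

End Core.

Arguments crsR {T} v {I} p1 p2.
Arguments ampl {T v} vinj {I p1 p2} pinj {q} q0 q1.

Lemma core_bound (T : finType) (v : T -> R) (vinj : injective v) (I : finType)
  (p1 p2 : I -> T) (pinj : forall i j, p1 i = p1 j -> p2 i = p2 j -> i = j) :
  (4 * #|T| <= #|I|)%nat ->
  #|I|%:R ^+ 3 <= 16 * #|T|%:R ^+ 2 * crsR v p1 p2.
Proof.
move=> le.
have cr0 : 0 <= crsR v p1 p2 by apply: sumr_ge0 => i _; apply: sumr_ge0.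
have [n0|npos] := posnP #|T|.
  have -> : #|I| = 0%nat.
    apply/eqP; rewrite eqn0Ngt; apply/negP => /card_gt0P[i _].
    by move: n0; rewrite (cardD1 (p1 i)).
  by rewrite expr0n /= mulr_ge0 // mulr_ge0 // exprn_ge0.
set m := (#|I|%:R : R); set n := (#|T|%:R : R); set cr := crsR v p1 p2.
have n0 : 0 < n by rewrite ltr0n.
have mge : 4 * n <= m by rewrite /m /n -(natrM _ 4%nat) ler_nat.
have m0 : 0 < m by apply: lt_le_trans mge; rewrite mulr_gt0.
set q := 4 * n / m.
have q0 : 0 < q by rewrite divr_gt0 // mulr_gt0.
have q1 : q <= 1 by rewrite ler_pdivrMr // mul1r.
have hq : q * m = 4 * n by rewrite /q divfK // gt_eqF.
have := ampl vinj pinj (ltW q0) q1; rewrite -/m -/n -/cr => A.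
have h1 : 4 * q * n <= q ^+ 4 * cr.
  have e : 2 * q ^+ 2 * m = 8 * q * n.
    have -> : 2 * q ^+ 2 * m = 2 * q * (q * m) by ring.
    rewrite hq; ring.
  rewrite e in A; lra.
have h2 : 4 * n <= q ^+ 3 * cr.
  rewrite -(ler_pM2l q0).
  have -> : q * (4 * n) = 4 * q * n by ring.
  have -> : q * (q ^+ 3 * cr) = q ^+ 4 * cr by ring.
  exact: h1.
have h3 : 4 * n * m ^+ 3 <= 64 * n ^+ 3 * cr.
  have -> : 64 * n ^+ 3 * cr = (q ^+ 3 * cr) * m ^+ 3.
    rewrite -(mulrA 64) (_ : 64 * (n ^+ 3 * cr) = (4 * n) ^+ 3 * cr); last by ring.
    rewrite -hq; ring.
  by apply: ler_wpM2r => //; apply: exprn_ge0; apply: ltW.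
have : 4 * n * m ^+ 3 <= 4 * n * (16 * n ^+ 2 * cr).
  have -> : 4 * n * (16 * n ^+ 2 * cr) = 64 * n ^+ 3 * cr by ring.
  exact: h3.
by rewrite ler_pM2l // mulr_gt0.
Qed.
Lemma sc0 (u v w z : R) : u <= v -> v <= w -> w <= z -> u * v < 0 -> w * z < 0 -> False.
Proof.
move=> uv vw wz h1 h2.
have v0 : 0 < v.
  rewrite ltNge; apply/negP => v0.
  have : 0 <= u * v by rewrite mulr_le0 // (le_trans uv v0).
  by rewrite leNgt h1.
have : 0 < w * z by rewrite mulr_gt0 // (lt_le_trans v0) // (le_trans vw).
by rewrite ltNge (ltW h2).
Qed.
Lemma sc (a b c e al be : R) : a < b -> b <= c -> c < e ->
  (al * a + be) * (al * b + be) < 0 -> (al * c + be) * (al * e + be) < 0 -> False.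
Proof.
move=> ab bc ce h1 h2.
case: (leP 0 al) => al0.
  by apply: (@sc0 _ _ _ _ _ _ _ h1 h2); rewrite lerD2r; apply: ler_wpM2l => //; apply: ltW.
apply: (@sc0 (-(al*a+be)) (-(al*b+be)) (-(al*c+be)) (-(al*e+be))).
- rewrite lerN2 lerD2r; apply: ler_wnM2l; [exact: ltW|exact: ltW].
- rewrite lerN2 lerD2r; apply: ler_wnM2l => //; exact: ltW.
- rewrite lerN2 lerD2r; apply: ler_wnM2l; [exact: ltW|exact: ltW].
- by rewrite mulrNN.
- by rewrite mulrNN.
Qed.

Lemma eqle (x y : R) : x = y -> x <= y.
Proof. by move=> ->. Qed.

Lemma atmost1 (K : nat) (Pr : nat -> bool) :
  (forall i j, (i < j)%nat -> (j < K)%nat -> Pr i -> Pr j -> False) ->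
  \sum_(i < K) (Pr i)%:R <= 1 :> R.
Proof.
elim: K => [|K IH] H; first by rewrite big_ord0 ler01.
rewrite big_ord_recr /=.
case PK: (Pr K).
  rewrite big1 ?add0r // => i _; case Pi: (Pr i) => //.
  by exfalso; apply: (H i K) => //.
rewrite addr0; apply: IH => i j ij jK; apply: H => //; exact: ltnW.
Qed.

Lemma memS b c (B C : {fset R}) : b \in B -> c \in C -> b + c \in sumset B C.
Proof. move=> bB cC; rewrite /sumset. by apply/imfset2P; exists b => //; exists c. Qed.
Lemma memP a s (A S : {fset R}) : a \in A -> s \in S -> a * s \in prodset A S.
Proof. move=> aA sS; by apply/imfset2P; exists a => //; exists s. Qed.

Lemma strips (A B C : {fset R}) :
  (4 * #|` prodset A (sumset B C)| <= #|` A `\ 0%R| * #|` B|)%nat ->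
  ((#|` C| - 1) * (#|` A `\ 0%R| * #|` B|) <= 16 * (#|` prodset A (sumset B C)| * #|` prodset A (sumset B C)|))%nat.
Proof.
set P := prodset A (sumset B C); set A' := A `\ 0%R.
move=> hm.
have [m0|mpos] := posnP (#|` A'| * #|` B|)%nat; first by rewrite m0 muln0.
have [k1|k2] := leqP #|` C| 1.
  by rewrite (_ : (#|` C| - 1 = 0)%nat) ?mul0n //; lia.
have /fset0Pn [a0 a0A] : A' != fset0 by rewrite -cardfs_gt0; move: mpos; rewrite muln_gt0 => /andP[].
have /fset0Pn [b0 b0B] : B != fset0 by rewrite -cardfs_gt0; move: mpos; rewrite muln_gt0 => /andP[].
have /fset0Pn [c0 c0C] : C != fset0 by rewrite -cardfs_gt0; lia.
have A'A : forall a, a \in A' -> (a != 0) && (a \in A) by move=> a; rewrite in_fsetD1.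
have memPP : forall a b c, a \in A' -> b \in B -> c \in C -> a * (b + c) \in P.
  by move=> a b c /A'A /andP[_ aA] bB cC; apply: memP => //; apply: memS.
pose t0 : P := [` memPP _ _ _ a0A b0B c0C].
pose I : finType := (A' * B)%type.
pose h (x : R) (l : I) := val l.1 * (val l.2 + x).
have hP : forall x l, x \in C -> h x l \in P.
  by move=> x [a b] xC; apply: (memPP) => //; apply: fsvalP.
pose phi (x : R) (l : I) : P := insubd t0 (h x l).
have vphi : forall x l, x \in C -> val (phi x l) = h x l.
  by move=> x l xC; rewrite val_insubd hP.
have hdiff : forall x (l l' : I), h x l - h x l' =
    (val l.1 - val l'.1) * x + (val l.1 * val l.2 - val l'.1 * val l'.2).
  by move=> x l l'; rewrite /h; ring.
have pinj : forall x x', x \in C -> x' \in C -> x != x' ->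
    forall l l', phi x l = phi x l' -> phi x' l = phi x' l' -> l = l'.
  move=> x x' xC x'C xx' l l' e1 e2.
  have f1 : h x l - h x l' = 0 by rewrite -!vphi // e1 subrr.
  have f2 : h x' l - h x' l' = 0 by rewrite -!vphi // e2 subrr.
  rewrite !hdiff in f1 f2.
  have ea : val l.1 = val l'.1.
    have : (val l.1 - val l'.1) * (x - x') = 0 by rewrite mulrBr; lra.
    by move/eqP; rewrite mulf_eq0 !subr_eq0 (negbTE xx') orbF => /eqP.
  have a0' : val l.1 != 0 by have /A'A /andP[] := fsvalP l.1.
  have eb : val l.2 = val l'.2.
    move: f1; rewrite ea subrr mul0r add0r -mulrBr => /eqP.
    by rewrite mulf_eq0 -ea (negbTE a0') /= subr_eq0 => /eqP.
  case: l l' ea eb {e1 e2 f1 f2 a0'} => [a b] [a' b'] /= ea eb.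
  by congr pair; apply: val_inj.
set cs := sort <=%R (enum_fset C).
have szcs : size cs = #|` C| by rewrite size_sort.
have csC : forall i, (i < size cs)%nat -> nth 0 cs i \in C.
  by move=> i ilt; have := mem_nth 0 ilt; rewrite mem_sort.
have st : sorted <%R cs by rewrite sort_lt_sorted fset_uniq.
have csl : forall i j, (i < j)%nat -> (j < size cs)%nat -> nth 0 cs i < nth 0 cs j.
  move=> i j ij js; apply: (sorted_ltn_nth lt_trans 0 st); rewrite ?inE //.
  exact: ltn_trans ij js.
set k := #|` C|; set m := (#|` A'| * #|` B|)%nat; set n := #|` P|.
have cardI : #|{: I}| = m by rewrite card_prod -!cardfE.
have cardT : #|{: P}| = n by rewrite -cardfE.
pose cr i := crsR val (phi (nth 0 cs i)) (phi (nth 0 cs i.+1)).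
have lower : forall i, (i.+1 < k)%nat -> m%:R ^+ 3 <= 16 * n%:R ^+ 2 * cr i :> R.
  move=> i ik.
  have xC : nth 0 cs i \in C by apply: csC; rewrite szcs; exact: ltn_trans ik.
  have x'C : nth 0 cs i.+1 \in C by apply: csC; rewrite szcs.
  have xx' : nth 0 cs i != nth 0 cs i.+1 by rewrite lt_eqF // csl // szcs.
  have := @core_bound _ val val_inj I _ _ (pinj _ _ xC x'C xx').
  by rewrite cardI cardT; apply.
have upper : \sum_(i < k.-1) cr i <= m%:R ^+ 2 :> R.
  rewrite /cr /crsR exchange_big /=.
  under eq_bigr do rewrite exchange_big /=.
  apply: (@le_trans _ _ (\sum_(l : I) \sum_(l' : I) 1%R)).
    apply: ler_sum => l _; apply: ler_sum => l' _.
    pose d x := (val l.1 - val l'.1) * x + (val l.1 * val l.2 - val l'.1 * val l'.2).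
    apply: (@le_trans _ _ (\sum_(i < k.-1) ((fun i => d (nth 0 cs i) * d (nth 0 cs i.+1) < 0) i)%:R)).
      apply: eqle; apply: eq_bigr => i _.
      have ik : (i.+1 < k)%nat by have := ltn_ord i; lia.
      have xC : nth 0 cs i \in C by apply: csC; rewrite szcs; exact: ltn_trans ik.
      have x'C : nth 0 cs i.+1 \in C by apply: csC; rewrite szcs.
      by rewrite /cross !vphi // !hdiff.
    apply: (@atmost1 k.-1 (fun i => d (nth 0 cs i) * d (nth 0 cs i.+1) < 0)) => i j ij jk Pi Pj.
    have js : (j.+1 < size cs)%nat by rewrite szcs; lia.
    apply: (@sc _ _ _ _ _ _ _ _ _ Pi Pj).
    - by apply: csl => //; lia.
    - move: ij; rewrite leq_eqVlt => /orP[/eqP -> //| lt].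
      by apply: ltW; apply: csl => //; lia.
    - by apply: csl.
  rewrite (eq_bigr (fun _ => 1%R *+ #|{: I}|)); last by move=> l _; rewrite sumr_const.
  have c1 : #|I| = m := cardI.
  have c2 : #|(xpredT : pred I)| = m := cardI.
  rewrite sumr_const c1; apply: eqle; by rewrite expr2 mulr_natr.

have tot : (m%:R ^+ 3) *+ k.-1 <= 16 * n%:R ^+ 2 * m%:R ^+ 2 :> R.
  apply: (@le_trans _ _ (\sum_(i < k.-1) 16 * n%:R ^+ 2 * cr i)).
    rewrite (_ : m%:R ^+ 3 *+ k.-1 = \sum_(i < k.-1) m%:R ^+ 3); last by rewrite sumr_const card_ord.
    apply: ler_sum => i _.
    by apply: lower; have := ltn_ord i; lia.
  rewrite -mulr_sumr; apply: ler_wpM2l => //.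
  by apply: mulr_ge0 => //; apply: exprn_ge0.
have mR : 0 < m%:R :> R by rewrite ltr0n.
have : (k.-1)%:R * m%:R <= 16 * n%:R ^+ 2 :> R.
  rewrite -(ler_pM2r (exprn_gt0 2 mR)); apply: le_trans tot; apply: eqle.
  rewrite -mulr_natr; ring.
rewrite -(natrX _ n 2) -(natrM _ 16) -natrM ler_nat.
move=> hh; rewrite subn1; move: hh; rewrite -mulnn. by [].
Qed.

Lemma card_img_le (f : R -> R) (X Y : {fset R}) :
  {in X &, injective f} -> (forall x, x \in X -> f x \in Y) -> (#|` X| <= #|` Y|)%nat.
Proof.
move=> inj sub; have /card_in_imfsetP/eqP <- := inj.
apply: fsubset_leq_card; apply/fsubsetP => y /imfsetP [x /= xX ->]; exact: sub.
Qed.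

Lemma key (A B C : {fset R}) : A != [fset (0 : R)] -> sumset B C != [fset (0 : R)] ->
  (#|` A| * #|` B| * #|` C| <= 64 * (#|` prodset A (sumset B C)| * #|` prodset A (sumset B C)|))%nat.
Proof.
move=> hA hS.
set P := prodset A (sumset B C); set A' := A `\ 0%R; set n := #|` P|.
have [->|Apos] := posnP #|` A|; first by rewrite !mul0n.
have [->|Bpos] := posnP #|` B|; first by rewrite muln0 mul0n.
have [->|Cpos] := posnP #|` C|; first by rewrite muln0.
have /fset0Pn [b0 b0B] : B != fset0 by rewrite -cardfs_gt0.
have /fset0Pn [c0 c0C] : C != fset0 by rewrite -cardfs_gt0.
have /fset0Pn [a1 a1A] : A != fset0 by rewrite -cardfs_gt0.
have /fset0Pn [a0 a0A'] : A' != fset0.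
  apply: contra hA => /eqP e; apply/eqP/fsetP => x; rewrite in_fset1.
  apply/idP/idP => [xA|/eqP ->].
    apply/negPn/negP => x0.
    have : x \in A' by rewrite in_fsetD1 x0.
    by rewrite e.
  have a10 : a1 == 0%R.
    apply/negPn/negP => x0.
    have : a1 \in A' by rewrite in_fsetD1 x0.
    by rewrite e.
  by move/eqP: a10 => <-.
have /andP[a00 a0A] : (a0 != 0%R) && (a0 \in A) by rewrite -in_fsetD1.
have /fset0Pn [s0 s0S'] : sumset B C `\ 0%R != fset0.
  apply: contra hS => /eqP e; apply/eqP/fsetP => x; rewrite in_fset1.
  apply/idP/idP => [xS|/eqP ->].
    apply/negPn/negP => x0.
    have : x \in sumset B C `\ 0%R by rewrite in_fsetD1 x0.
    by rewrite e.
  have bc : b0 + c0 \in sumset B C by apply: memS.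
  have a10 : b0 + c0 == 0%R.
    apply/negPn/negP => x0.
    have : b0 + c0 \in sumset B C `\ 0%R by rewrite in_fsetD1 x0.
    by rewrite e.
  by move/eqP: a10 => <-.
have /andP[s00 s0S] : (s0 != 0%R) && (s0 \in sumset B C) by rewrite -in_fsetD1.
have hC : (#|` C| <= n)%nat.
  apply: (@card_img_le (fun c => a0 * (b0 + c))).
    by move=> x y _ _ /(mulfI a00) /addrI.
  by move=> x xC; apply: memP => //; apply: memS.
have hB : (#|` B| <= n)%nat.
  apply: (@card_img_le (fun b => a0 * (b + c0))).
    by move=> x y _ _ /(mulfI a00) /addIr.
  by move=> x xB; apply: memP => //; apply: memS.
have hA' : (#|` A'| <= n)%nat.
  apply: (@card_img_le (fun a => a * s0)).
    by move=> x y _ _ /(mulIf s00).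
  move=> x; rewrite in_fsetD1 => /andP[_ xA]; exact: memP.
have hAA : (#|` A| <= 2 * #|` A'|)%nat.
  have := cardfsD1 0%R A; rewrite -/A' => ->.
  have : (0 < #|` A'|)%nat by rewrite cardfs_gt0; apply/fset0Pn; exists a0.
  case: (_ \in _); lia.
set m := (#|` A'| * #|` B|)%nat; set k := #|` C|.
have hN : (#|` A| * #|` B| * #|` C| <= 2 * (m * k))%nat.
  rewrite /m /k mulnA mulnA; apply: leq_mul => //; apply: leq_mul => //.
have [hm|hm] := leqP (4 * n) m.
  have := @strips A B C hm; rewrite -/P -/n -/k -/m => hs.
  have [k1|k2] := leqP k 1.
    have : (m <= n * n)%nat by apply: leq_mul.
    have : (m * k <= m)%nat by rewrite -{2}[m]muln1 leq_mul.
    lia.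
  have : (m * k <= 2 * ((k - 1) * m))%nat.
    rewrite mulnC mulnA leq_mul2r; apply/orP; right; lia.
  lia.
have : (m * k <= 4 * n * n)%nat.
  by apply: leq_mul; [exact: ltnW | exact: hC].
lia.
Qed.

Theorem lemma3p3 :
  exists c : R, 0 < c /\
    forall A B C : {fset R},
      A != [fset (0 : R)] ->
      sumset B C != [fset (0 : R)] ->
      c * Num.sqrt ((#|` A| * #|` B| * #|` C|)%:R : R)
        <= (#|` prodset A (sumset B C)|)%:R.
Proof.
exists (8%:R)^-1; split; first by rewrite invr_gt0 ltr0n.
move=> A B C hA hS.
have := @key A B C hA hS.
set N := (_ * _ * _)%nat; set n := #|` _|.
move=> hN.
have h1 : Num.sqrt (N%:R : R) <= 8%:R * n%:R.
  rewrite -[X in _ <= X]ger0_norm ?mulr_ge0 // -sqrtr_sqr.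
  apply: ler_wsqrtr; rewrite exprMn -!natrX -natrM ler_nat.
  by rewrite expnS expn1 -mulnn mulnA in hN *.
apply: le_trans (ler_wpM2l _ h1) _; first by rewrite invr_ge0 ler0n.
by rewrite mulrA mulVf ?mul1r // pnatr_eq0.
Qed.
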